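(* Let $X\in\mathbb R^{n\times d}$ ($d\ge n$) with $XX^\top$ nonsingular, $\Sigma$ symmetric positive definite, $\sigma>0$, and $\rho\in D:=\{\rho\ge0:\Sigma-\frac\rho dX^\top X\succ0\}$. Then $$\mathcal P(A(\rho,\Sigma);\Sigma)-\mathcal P(A(0,\Sigma);\Sigma)=\frac{\rho^2\sigma^4}{d}\mathrm{Tr}\Big(\big(\Sigma-\tfrac\rho dX^\top X\big)^{-1}\Sigma\big(\Sigma-\tfrac\rho dX^\top X\big)^{-1}X^\top X(X^\top X+d\sigma^2I)^{-1}\Big),$$ and $$\mathcal T(A(\rho,\Sigma);\Sigma)=\frac{d\sigma^4}{n}\mathrm{Tr}\Big(\Sigma\big(\Sigma-\tfrac\rho dX^\top X\big)^{-1}X^\top X\big(\Sigma-\tfrac\rho dX^\top X\big)^{-1}\Sigma(X^\top X)^\dagger(X^\top X+d\sigma^2I)^{-1}\Big).$$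
   Context: $\mathcal P(A;\Sigma):=\frac1d\|\Sigma^{1/2}(AX-I)\|_F^2+\sigma^2\|\Sigma^{1/2}A\|_F^2$, $\mathcal T(A;\Sigma):=\frac1{nd}\|XAX-X\|_F^2+\frac{\sigma^2}{n}\|XA-I\|_F^2$, and $A(\rho,\Sigma):=\big(I-\rho\sigma^2(\Sigma-\frac\rho dX^\top X)^{-1}\big)(X^\top X+d\sigma^2I)^{-1}X^\top$. $(\cdot)^\dagger$ is the Moore–Penrose pseudoinverse. *)

(* Defs.v *)
From HB Require Import structures.
From mathcomp Require Import all_boot all_order all_algebra.
From Stdlib Require Import ClassicalEpsilon.
Set Implicit Arguments. Unset Strict Implicit. Unset Printing Implicit Defensive.
Import Order.TTheory GRing.Theory Num.Theory.
Local Open Scope ring_scope.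

Section Defs.
Variable R : rcfType.

Definition frob (m p : nat) (M : 'M[R]_(m, p)) : R :=
  Num.sqrt (\sum_(i < m) \sum_(j < p) (M i j) ^+ 2).

Definition symmetric (k : nat) (S : 'M[R]_k) : Prop := S^T = S.

Definition posdef (k : nat) (S : 'M[R]_k) : Prop :=
  symmetric S /\ forall v : 'cV[R]_k, v != 0 -> 0 < (v^T *m S *m v) 0 0.

Definition possemidef (k : nat) (S : 'M[R]_k) : Prop :=
  symmetric S /\ forall v : 'cV[R]_k, 0 <= (v^T *m S *m v) 0 0.

Definition is_sqrtm (k : nat) (S Sigma : 'M[R]_k) : Prop :=
  possemidef S /\ S *m S = Sigma.

Definition is_pinv (m p : nat) (M : 'M[R]_(m, p)) (Mp : 'M[R]_(p, m)) : Prop :=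
  [/\ M *m Mp *m M = M, Mp *m M *m Mp = Mp,
      (M *m Mp)^T = M *m Mp & (Mp *m M)^T = Mp *m M].

Definition pinv (m p : nat) (M : 'M[R]_(m, p)) : 'M[R]_(p, m) :=
  epsilon (inhabits 0) (is_pinv M).

Definition Amat (n d : nat) (X : 'M[R]_(n, d)) (sigma rho : R) (Sigma : 'M[R]_d)
  : 'M[R]_(d, n) :=
  (1%:M - (rho * sigma ^+ 2) *: invmx (Sigma - (rho / d%:R) *: (X^T *m X)))
    *m invmx (X^T *m X + (d%:R * sigma ^+ 2) *: 1%:M) *m X^T.

(* P(A; Sigma), with Sh = Sigma^{1/2} *)
Definition Pcal (n d : nat) (X : 'M[R]_(n, d)) (sigma : R) (Sh : 'M[R]_d)
  (A : 'M[R]_(d, n)) : R :=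
  d%:R^-1 * frob (Sh *m (A *m X - 1%:M)) ^+ 2 + sigma ^+ 2 * frob (Sh *m A) ^+ 2.

Definition Tcal (n d : nat) (X : 'M[R]_(n, d)) (sigma : R) (A : 'M[R]_(d, n)) : R :=
  (n%:R * d%:R)^-1 * frob (X *m A *m X - X) ^+ 2
  + sigma ^+ 2 / n%:R * frob (X *m A - 1%:M) ^+ 2.

End Defs.

(* Main.v *)
Require Import Defs.
From HB Require Import structures.
From mathcomp Require Import all_boot all_order all_algebra.
From Stdlib Require Import ClassicalEpsilon.
From mathcomp Require Import ring lra.
Import Order.TTheory GRing.Theory Num.Theory.
Local Open Scope ring_scope.

Section H.
Set Implicit Arguments. Unset Strict Implicit.
Variable R : rcfType.

Lemma frob2 m p (M : 'M[R]_(m,p)) : frob M ^+ 2 = \tr (M *m M^T).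
Proof.
rewrite /frob sqr_sqrtr; last by apply: sumr_ge0 => i _; apply: sumr_ge0 => j _; exact: sqr_ge0.
rewrite /mxtrace; apply: eq_bigr => i _; rewrite mxE; apply: eq_bigr => j _.
by rewrite mxE expr2.
Qed.

Lemma rowsq k (w : 'rV[R]_k) : (w *m w^T) 0 0 = \sum_i w 0 i ^+ 2.
Proof. by rewrite mxE; apply: eq_bigr => i _; rewrite mxE expr2. Qed.

Lemma rowsq_ge0 k (w : 'rV[R]_k) : 0 <= (w *m w^T) 0 0.
Proof. by rewrite rowsq; apply: sumr_ge0 => i _; exact: sqr_ge0. Qed.

Lemma rowsq_gt0 k (w : 'rV[R]_k) : w != 0 -> 0 < (w *m w^T) 0 0.
Proof.
move=> nz; rewrite lt_neqAle rowsq_ge0 andbT; apply/negP => /eqP h.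
move/eqP: nz; apply; apply/matrixP => i j; rewrite [i]ord1 mxE.
have := psumr_eq0P (P := xpredT) (fun i _ => sqr_ge0 (w 0 i)).
rewrite -rowsq -h => /(_ erefl j isT) /eqP.
by rewrite sqrf_eq0 => /eqP.
Qed.

Lemma unit_gram a b (Y : 'M[R]_(a,b)) (c : R) : 0 < c ->
  (Y^T *m Y + c *: 1%:M) \in unitmx.
Proof.
move=> c0; rewrite unitmxE unitfE; apply/negP => /det0P [v nz hv].
have h : (v *m Y^T *m Y *m v^T) 0 0 + c * (v *m v^T) 0 0 = 0.
  have := congr1 (fun M => (M *m v^T) 0 0) hv.
  rewrite mul0mx [in RHS]mxE mulmxDr mulmxDl -scalemxAr mulmx1 -scalemxAl.
  by move=> <-; rewrite [RHS]mxE [X in _ = _ + X]mxE mulmxA.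
move: h.
have -> : v *m Y^T *m Y *m v^T = (v *m Y^T) *m (v *m Y^T)^T.
  by rewrite trmx_mul trmxK !mulmxA.
move=> h; have := rowsq_ge0 (v *m Y^T); have := rowsq_gt0 nz.
move: h; set s := (_ *m _) 0 0; set t := (_ *m _) 0 0 => h ht hs.
have : 0 < s + c * t by rewrite ltr_wpDl // mulr_gt0.
by rewrite h ltxx.
Qed.

Lemma unit_gram' a b (Y : 'M[R]_(a,b)) (c : R) : 0 < c ->
  (Y *m Y^T + c *: 1%:M) \in unitmx.
Proof. by move=> c0; have := unit_gram (Y^T) c0; rewrite trmxK. Qed.

Lemma symsand a b (Y : 'M[R]_(a,b)) (S : 'M[R]_a) : S^T = S ->
  (Y^T *m S *m Y)^T = Y^T *m S *m Y.
Proof. by move=> h; rewrite !trmx_mul trmxK h mulmxA. Qed.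

Lemma trZZ m p (a : R) (P : 'M[R]_(m,p)) :
  \tr ((a *: P) *m (a *: P)^T) = a ^+ 2 * \tr (P *m P^T).
Proof. by rewrite linearZ /= -scalemxAl -scalemxAr scalerA mxtraceZ expr2. Qed.

Lemma trW m k p (F : 'M[R]_(m,k)) (Y : 'M[R]_(k,p)) (c : R) :
  \tr (F *m Y *m (F *m Y)^T) + c * \tr (F *m F^T)
  = \tr (F *m (Y *m Y^T + c *: 1%:M) *m F^T).
Proof.
by rewrite trmx_mul mulmxDr mulmxDl mxtraceD -scalemxAr mulmx1 -scalemxAl mxtraceZ !mulmxA.
Qed.

Lemma tr_sand m k (X : 'M[R]_(m,k)) (B : 'M[R]_k) (Q : 'M[R]_m) :
  (X *m B *m X^T *m Q)^T = Q^T *m X *m B^T *m X^T.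
Proof. by rewrite !trmx_mul trmxK !mulmxA. Qed.

Lemma zmodlem (V : zmodType) (a b e : V) : a - b - (a + e) = - e - b.
Proof. by rewrite opprD addrACA subrr add0r addrC. Qed.

Lemma posdef_unit k (S : 'M[R]_k) : posdef S -> S \in unitmx.
Proof.
case=> _ pd; rewrite unitmxE unitfE; apply/negP => /det0P [v nz hv].
have := pd v^T; rewrite trmx_eq0 nz trmxK hv mul0mx mxE ltxx.
by move=> /(_ isT).
Qed.

Lemma inv_comm k (A B : 'M[R]_k) : A \in unitmx -> A *m B = B *m A ->
  invmx A *m B = B *m invmx A.
Proof.
move=> uA h.
by rewrite -[LHS]mulmx1 -(mulmxV uA) !mulmxA -[invmx A *m B *m A]mulmxA -h
  mulmxA mulVmx // mul1mx.
Qed.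

Lemma pinv_uniq m p (A : 'M[R]_(m,p)) B C : is_pinv A B -> is_pinv A C -> B = C.
Proof.
case=> [h1 h2 h3 h4] [g1 g2 g3 g4].
have eAB : A *m B = A *m C.
  transitivity ((A *m B)^T); first by rewrite h3.
  transitivity ((A *m C *m A *m B)^T); first by rewrite g1.
  by rewrite -[A *m C *m A *m B]mulmxA trmx_mul h3 g3 mulmxA h1.
have eBA : B *m A = C *m A.
  transitivity ((B *m A)^T); first by rewrite h4.
  transitivity ((B *m (A *m C *m A))^T); first by rewrite g1.
  rewrite (_ : B *m (A *m C *m A) = (B *m A) *m (C *m A)); last by rewrite !mulmxA.
  by rewrite trmx_mul g4 h4 -[C *m A *m _]mulmxA [A *m (B *m A)]mulmxA h1.
by rewrite -h2 -mulmxA eAB mulmxA eBA g2.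
Qed.

Lemma pinv_spec m p (A : 'M[R]_(m,p)) B : is_pinv A B -> pinv A = B.
Proof.
move=> hB; apply: (pinv_uniq _ hB).
rewrite /pinv; exact: (epsilon_spec (inhabits 0) (is_pinv A) (ex_intro _ B hB)).
Qed.

Lemma frobSh k m (Sh S : 'M[R]_k) (B : 'M[R]_(k,m)) : Sh^T = Sh -> Sh *m Sh = S ->
  frob (Sh *m B) ^+ 2 = \tr (B *m B^T *m S).
Proof.
move=> hT hS; rewrite frob2 trmx_mul hT mulmxA mxtrace_mulC !mulmxA hS.
by rewrite -mulmxA mxtrace_mulC.
Qed.

Section Bil.
Variables (d : nat) (S : 'M[R]_d).
Hypothesis hS : S^T = S.
Definition bl k (P Q : 'M[R]_(d,k)) := \tr (P *m Q^T *m S).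
Lemma trbl k (P Q : 'M[R]_(d,k)) : \tr (P *m Q^T *m S) = bl P Q.
Proof. by []. Qed.
Lemma bDl k (P1 P2 Q : 'M[R]_(d,k)) : bl (P1 + P2) Q = bl P1 Q + bl P2 Q.
Proof. by rewrite /bl !mulmxDl mxtraceD. Qed.
Lemma bDr k (P Q1 Q2 : 'M[R]_(d,k)) : bl P (Q1 + Q2) = bl P Q1 + bl P Q2.
Proof. by rewrite /bl linearD /= mulmxDr mulmxDl mxtraceD. Qed.
Lemma bZl k a (P Q : 'M[R]_(d,k)) : bl (a *: P) Q = a * bl P Q.
Proof. by rewrite /bl -!scalemxAl mxtraceZ. Qed.
Lemma bC k (P Q : 'M[R]_(d,k)) : bl P Q = bl Q P.
Proof. by rewrite /bl -mxtrace_tr !trmx_mul trmxK hS mxtrace_mulC. Qed.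
Lemma bZr k a (P Q : 'M[R]_(d,k)) : bl P (a *: Q) = a * bl P Q.
Proof. by rewrite bC bZl bC. Qed.
Lemma bMr k l (P : 'M[R]_(d,k)) (Q : 'M[R]_(d,l)) Z : bl P (Q *m Z) = bl (P *m Z^T) Q.
Proof. by rewrite /bl trmx_mul !mulmxA. Qed.
Lemma b0l k (Q : 'M[R]_(d,k)) : bl 0 Q = 0.
Proof. by rewrite /bl !mul0mx mxtrace0. Qed.
End Bil.

Lemma quad d n (X : 'M[R]_(n,d)) (S : 'M[R]_d) (s : R) (Y E : 'M[R]_(d,n)) :
 S^T = S -> d%:R != 0 :> R -> Y *m (X *m X^T + (d%:R * s) *: 1%:M) = X^T ->
 (d%:R^-1 * \tr (((Y+E) *m X - 1%:M) *m ((Y+E) *m X - 1%:M)^T *m S)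
   + s * \tr ((Y+E) *m (Y+E)^T *m S))
 - (d%:R^-1 * \tr ((Y *m X - 1%:M) *m (Y *m X - 1%:M)^T *m S)
   + s * \tr (Y *m Y^T *m S))
 = d%:R^-1 * \tr (E *m (X *m X^T + (d%:R * s) *: 1%:M) *m E^T *m S).
Proof.
move=> hS d0 hY.
set W := X *m X^T + _.
set U := Y *m X - 1%:M.
have z : U *m X^T + (d%:R * s) *: Y = 0.
  have -> : U *m X^T + (d%:R * s) *: Y = Y *m W - X^T.
    rewrite /U /W mulmxBl mul1mx mulmxDr -scalemxAr mulmx1 mulmxA.
    by rewrite addrAC.
  by rewrite hY subrr.
have -> : (Y + E) *m X - 1%:M = U + E *m X by rewrite mulmxDl /U addrAC.
rewrite !trbl.
clearbody U.
rewrite !(bDl, bDr) (bC hS (E *m X) U) (bC hS E Y).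
have h1 : bl S U (E *m X) = - ((d%:R * s) * bl S Y E).
  apply/eqP; rewrite -subr_eq0 opprK bMr -bZl -bDl z b0l.
  by [].
have h2 : bl S (E *m W) E = bl S (E *m X) (E *m X) + (d%:R * s) * bl S E E.
  by rewrite /W mulmxDr bDl -scalemxAr mulmx1 bZl bMr mulmxA.
rewrite h2 h1.
by field.
Qed.
Lemma frob_0 p (M : 'M[R]_(0,p)) : frob M = 0.
Proof. by rewrite /frob big_ord0 sqrtr0. Qed.
Lemma tr_0 (A : 'M[R]_0) : \tr A = 0.
Proof. by rewrite /mxtrace big_ord0. Qed.
End H.

Theorem lemma3 (R : rcfType) (n d : nat) (X : 'M[R]_(n, d))
  (Sigma Sh : 'M[R]_d) (sigma rho : R) :
  (n <= d)%N ->
  X *m X^T \in unitmx ->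
  posdef Sigma ->
  is_sqrtm Sh Sigma ->
  0 < sigma ->
  0 <= rho ->
  posdef (Sigma - (rho / d%:R) *: (X^T *m X)) ->
  let M := Sigma - (rho / d%:R) *: (X^T *m X) in
  let G := X^T *m X in
  let K := invmx (G + (d%:R * sigma ^+ 2) *: 1%:M) in
  Pcal X sigma Sh (Amat X sigma rho Sigma) - Pcal X sigma Sh (Amat X sigma 0 Sigma)
    = rho ^+ 2 * sigma ^+ 4 / d%:R
      * \tr (invmx M *m Sigma *m invmx M *m G *m K)
  /\
  Tcal X sigma (Amat X sigma rho Sigma)
    = d%:R * sigma ^+ 4 / n%:R
      * \tr (Sigma *m invmx M *m G *m invmx M *m Sigma *m pinv G *m K).
Proof.
move=> hnd hXu hS hSh sig0 rho0 hMpd M G K.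
have [d0|dpos] := eqVneq d 0%N.
  subst d. have n0 : n = 0%N by apply/eqP; rewrite -leqn0.
  subst n.
  have hP : forall B, Pcal X sigma Sh B = 0 by move=> B; rewrite /Pcal !frob_0; ring.
  have hT : forall B, Tcal X sigma B = 0 by move=> B; rewrite /Tcal !frob_0; ring.
  rewrite !hP !hT !tr_0.
  by split; ring.
have dR : d%:R != 0 :> R by rewrite pnatr_eq0.
case: hS => symS _; case: hSh => [[symSh _] ShSh]; case: (hMpd) => symM _.
have uM : M \in unitmx := posdef_unit hMpd.
have symG : G^T = G by rewrite /G trmx_mul trmxK.
set c := d%:R * sigma ^+ 2.
have c0 : 0 < c by rewrite mulr_gt0 // ?ltr0n ?lt0n // exprn_gt0.
have uGc : (G + c *: 1%:M) \in unitmx by exact: unit_gram.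
have symK : K^T = K by rewrite /K trmx_inv linearD /= symG linearZ /= trmx1.
have hKX : K *m X^T *m (X *m X^T + c *: 1%:M) = X^T.
  rewrite -mulmxA (_ : X^T *m (X *m X^T + c *: 1%:M) = (G + c *: 1%:M) *m X^T).
    by rewrite mulmxA mulVmx // mul1mx.
  by rewrite /G mulmxDr mulmxDl -scalemxAr mulmx1 -scalemxAl mul1mx mulmxA.
have A0E : Amat X sigma 0 Sigma = K *m X^T.
  by rewrite /Amat mul0r scale0r subr0 mul1mx.
have AE : Amat X sigma rho Sigma
    = K *m X^T + (- (rho * sigma ^+ 2)) *: (invmx M *m K *m X^T).
  by rewrite /Amat mulmxBl mul1mx mulmxBl scaleNr -!scalemxAl.
have symM' : M^T = M := symM.
have eEW : invmx M *m K *m X^T *m (X *m X^T + c *: 1%:M) = invmx M *m X^T.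
  by rewrite -[in RHS]hKX !mulmxA.
have eET : (invmx M *m K *m X^T)^T = X *m K *m invmx M.
  by rewrite !trmx_mul trmxK symK trmx_inv symM' !mulmxA.
split.
  rewrite A0E AE /Pcal.
  rewrite !(frobSh _ symSh ShSh).
  rewrite quad // -/c.
  rewrite -scalemxAl eEW linearZ /= eET -!scalemxAr -!scalemxAl !mxtraceZ.
  have -> : \tr (invmx M *m X^T *m (X *m K *m invmx M) *m Sigma)
      = \tr (invmx M *m Sigma *m invmx M *m G *m K).
    rewrite /G; transitivity (\tr ((invmx M *m X^T *m X *m K) *m (invmx M *m Sigma))).
      by rewrite !mulmxA.
    by rewrite mxtrace_mulC !mulmxA.
  by field.
set W := X *m X^T + c *: 1%:M in hKX eEW *.
have uW : W \in unitmx.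
  exact: unit_gram'.
set Q := invmx (X *m X^T).
set Wi := invmx W.
have symQ : Q^T = Q.
 rewrite /Q trmx_inv trmx_mul; congr (invmx (_ *m _)); exact: trmxK.
have symW : W^T = W by rewrite /W linearD /= trmx_mul trmxK linearZ /= trmx1.
have symWi : Wi^T = Wi by rewrite /Wi trmx_inv symW.
have KXT : K *m X^T = X^T *m Wi.
  by rewrite -[LHS](mulmxK uW) hKX.
have XK : X *m K = Wi *m X.
  by apply: trmx_inj; rewrite !trmx_mul symK symWi KXT.
have QW : Q *m W = W *m Q.
  apply: inv_comm => //; rewrite /W mulmxDr mulmxDl -scalemxAr -scalemxAl mulmx1 mul1mx.
  by rewrite mulmxA.
have WiQ : Wi *m Q = Q *m Wi by apply: inv_comm => //.
have can1 : forall k (C : 'M[R]_(k, n)), C *m X *m X^T *m Q = C.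
  by move=> k C; rewrite -[C *m X *m X^T]mulmxA -mulmxA mulmxV // mulmx1.
have can2 : forall k (C : 'M[R]_(k, n)), C *m Q *m X *m X^T = C.
  by move=> k C; rewrite -mulmxA -mulmxA mulVmx // mulmx1.
have pinvG : pinv G = X^T *m Q *m Q *m X.
  have hGP : G *m (X^T *m Q *m Q *m X) = X^T *m Q *m X.
    by rewrite /G !mulmxA can1.
  have hPG : (X^T *m Q *m Q *m X) *m G = X^T *m Q *m X.
    by rewrite /G !mulmxA can2.
  apply: pinv_spec; split.
  - by rewrite hGP /G !mulmxA can2.
  - by rewrite hPG !mulmxA can2.
  - by rewrite hGP symsand.
  - by rewrite hPG symsand.
set A := Amat X sigma rho Sigma.
have symS' : Sigma^T = Sigma := symS.
have cc : c * (rho / d%:R) = rho * sigma ^+ 2 by rewrite /c; field.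
have hXQ : X *m X^T *m Q = 1%:M by rewrite mulmxV.
set S := X *m invmx M *m Sigma *m X^T *m Q.
have hS' : S = 1%:M + (rho / d%:R) *: (X *m invmx M *m X^T).
  have eSig : Sigma = M + (rho / d%:R) *: G by rewrite /M subrK.
  rewrite /S eSig mulmxDr !mulmxDl -[X *m invmx M *m M]mulmxA mulVmx // mulmx1 hXQ.
  by rewrite -scalemxAr -!scalemxAl /G !mulmxA can1.
have hAW : X *m A *m W = X *m X^T - (rho * sigma ^+ 2) *: (X *m invmx M *m X^T).
  rewrite /A AE (mulmxDr X) mulmxDl -scalemxAr -scalemxAl -(mulmxA X (K *m X^T)) hKX.
  by rewrite -(mulmxA X (invmx M *m K *m X^T)) eEW mulmxA scaleNr.
have hE2 : X *m A - 1%:M = - c *: (S *m Wi).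
  rewrite -[LHS](mulmxK uW) mulmxBl hAW mul1mx hS' [RHS]scalemxAl; congr (_ *m _); rewrite /W.
  by rewrite scalerDr scalerA mulNr cc !scaleNr zmodlem.
have eX : X *m A *m X - X = (X *m A - 1%:M) *m X by rewrite mulmxBl mul1mx.
rewrite /Tcal eX !frob2 hE2 -scalemxAl !trZZ.
have key : \tr (S *m Wi *m X *m (S *m Wi *m X)^T) + c * \tr (S *m Wi *m (S *m Wi)^T)
    = \tr (Sigma *m invmx M *m G *m invmx M *m Sigma *m pinv G *m K).
  rewrite trW -/W -[S *m Wi *m W]mulmxA mulVmx // mulmx1 trmx_mul symWi.
  have St : S^T = Q *m X *m Sigma *m invmx M *m X^T.
    rewrite /S -(mulmxA X (invmx M) Sigma) tr_sand symQ trmx_mul trmx_inv symM' symS'.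
    by rewrite !mulmxA.
  have QQW : forall k (C : 'M[R]_(k,n)), C *m Q *m Q *m Wi = C *m Q *m Wi *m Q.
    by move=> k C; rewrite -!mulmxA WiQ.
  have XKl : forall k (C : 'M[R]_(k,n)), C *m X *m K = C *m Wi *m X.
    by move=> k C; rewrite -!mulmxA XK.
  have eR : Sigma *m invmx M *m G *m invmx M *m Sigma *m (X^T *m Q *m Q *m X) *m K
     = (Sigma *m invmx M *m X^T *m X) *m (invmx M *m Sigma *m X^T *m Q *m Wi *m Q *m X).
    rewrite /G !mulmxA XKl; congr (_ *m X); exact: QQW.
  rewrite pinvG eR St.
  transitivity (\tr (X *m (invmx M *m Sigma *m X^T *m Q *m Wi *m Q *m X *m Sigma *m invmx M *m X^T))).
    by rewrite !mulmxA.
  have e1 := mxtrace_mulC X (invmx M *m Sigma *m X^T *m Q *m Wi *m Q *m X *m Sigma *m invmx M *m X^T).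
  have e2 := mxtrace_mulC (Sigma *m invmx M *m X^T *m X) (invmx M *m Sigma *m X^T *m Q *m Wi *m Q *m X).
  rewrite e1 e2 !mulmxA //.
rewrite -key invfM.
set ni := n%:R^-1.
rewrite /c; field; exact: dR.
Qed.
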